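(* Let $G^c$ be a connected vertex-coloured graph with $n$ vertices, $c$ colours and minimum degree $\delta\ge 9$. Then either $\gamma^t(G^c)=c$ or $\gamma^t(G^c)<\frac{\delta(n-c+1)}{3\delta-1}+c-1$.
   Context: A vertex-coloured graph $G^c$ with colour set $\{1,\dots,c\}$ is a finite simple graph in which every vertex receives exactly one colour and every colour appears on at least one vertex. A dominating set is tropical if every colour appears on at least one of its vertices; $\gamma^t(G^c)$ is the minimum size of a tropical dominating set. *)

(* Defs.v *)
From HB Require Import structures.
From mathcomp Require Import all_boot all_order all_algebra.
Set Implicit Arguments. Unset Strict Implicit. Unset Printing Implicit Defensive.

Definition simple_graph (T : finType) (e : rel T) : Prop :=
  symmetric e /\ irreflexive e.

Definition connected_graph (T : finType) (e : rel T) : Prop :=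
  forall x y : T, connect e x y.

Definition nbhd (T : finType) (e : rel T) (x : T) : {set T} := [set y | e x y].
Definition deg (T : finType) (e : rel T) (x : T) : nat := #|nbhd e x|.

(* minimum degree (the graph is nonempty in our setting; value #|T| if empty) *)
Definition min_deg (T : finType) (e : rel T) : nat :=
  \big[minn/#|T|]_(x : T) deg e x.

Definition dominating (T : finType) (e : rel T) (D : {set T}) : bool :=
  [forall x, (x \in D) || [exists y in D, e x y]].

Definition surjective_colouring (T : finType) (c : nat) (col : T -> 'I_c) : Prop :=
  forall k : 'I_c, exists x : T, col x = k.

Definition tropical (T : finType) (c : nat) (col : T -> 'I_c) (D : {set T}) : bool :=
  [forall k : 'I_c, [exists x in D, col x == k]].

Definition tropical_dominating (T : finType) (e : rel T) (c : nat)
  (col : T -> 'I_c) (D : {set T}) : bool :=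
  dominating e D && tropical col D.

(* tropical domination number: minimum size of a tropical dominating set
   (the whole vertex set is one when the colouring is surjective) *)
Definition gamma_t (T : finType) (e : rel T) (c : nat) (col : T -> 'I_c) : nat :=
  \big[minn/#|T|]_(D : {set T} | tropical_dominating e col D) #|D|.

(* Main.v *)
Require Import Defs.
From HB Require Import structures.
From mathcomp Require Import all_boot all_order all_algebra.
From mathcomp Require Import ring lra zify.
Import Order.TTheory GRing.Theory Num.Theory.
Set Warnings "-notation-overridden,-abstract-large-number,-ambiguous-paths".

Lemma ff10 a : (9 + a) ^_ 10 = (9+a)*(8+a)*(7+a)*(6+a)*(5+a)*(4+a)*(3+a)*(2+a)*(1+a)*(0+a).
Proof. by rewrite ffactE /= muln1 !mulnA. Qed.
Lemma bin_ffact_shift N k t : 'C(N - t, k) * N ^_ t = 'C(N, k) * (N - k) ^_ t.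
Proof.
elim: t => [|t IH]; first by rewrite !subn0 !ffactn0.
rewrite !ffactnSr mulnA subnS.
have -> : 'C((N - t).-1, k) * N ^_ t * (N - t) = ((N - t) * 'C((N - t).-1, k)) * N ^_ t by ring.
rewrite mul_bin_down.
have -> : (N - t - k) * 'C(N - t, k) * N ^_ t = ('C(N - t, k) * N ^_ t) * (N - t - k) by ring.
by rewrite IH -mulnA subnAC.
Qed.
Lemma poly0 (j : nat) : 3 * (9 + (4 * j + 3)) * ((9 + (3 * j + 0)) * (8 + (3 * j + 0)) * (7 + (3 * j + 0)) * (6 + (3 * j + 0)) * (5 + (3 * j + 0)) * (4 + (3 * j + 0)) * (3 + (3 * j + 0)) * (2 + (3 * j + 0)) * (1 + (3 * j + 0)) * (0 + (3 * j + 0))) <= (j + 1 + 0) * ((9 + (4 * j + 3)) * (8 + (4 * j + 3)) * (7 + (4 * j + 3)) * (6 + (4 * j + 3)) * (5 + (4 * j + 3)) * (4 + (4 * j + 3)) * (3 + (4 * j + 3)) * (2 + (4 * j + 3)) * (1 + (4 * j + 3)) * (0 + (4 * j + 3))).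
Proof.
have -> : (j + 1 + 0) * ((9 + (4 * j + 3)) * (8 + (4 * j + 3)) * (7 + (4 * j + 3)) * (6 + (4 * j + 3)) * (5 + (4 * j + 3)) * (4 + (4 * j + 3)) * (3 + (4 * j + 3)) * (2 + (4 * j + 3)) * (1 + (4 * j + 3)) * (0 + (4 * j + 3))) = 3 * (9 + (4 * j + 3)) * ((9 + (3 * j + 0)) * (8 + (3 * j + 0)) * (7 + (3 * j + 0)) * (6 + (3 * j + 0)) * (5 + (3 * j + 0)) * (4 + (3 * j + 0)) * (3 + (3 * j + 0)) * (2 + (3 * j + 0)) * (1 + (3 * j + 0)) * (0 + (3 * j + 0))) + (239500800 * j ^ 0 + 1736190720 * j ^ 1 + 5511390912 * j ^ 2 + 10104772848 * j ^ 3 + 11891179280 * j ^ 4 + 9438550340 * j ^ 5 + 5162807496 * j ^ 6 + 1949095164 * j ^ 7 + 498577920 * j ^ 8 + 82462140 * j ^ 9 + 7954792 * j ^ 10 + 339988 * j ^ 11) by ring.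
exact: leq_addr.
Qed.

Lemma poly1 (j : nat) : 3 * (9 + (4 * j + 4)) * ((9 + (3 * j + 1)) * (8 + (3 * j + 1)) * (7 + (3 * j + 1)) * (6 + (3 * j + 1)) * (5 + (3 * j + 1)) * (4 + (3 * j + 1)) * (3 + (3 * j + 1)) * (2 + (3 * j + 1)) * (1 + (3 * j + 1)) * (0 + (3 * j + 1))) <= (j + 1 + 1) * ((9 + (4 * j + 4)) * (8 + (4 * j + 4)) * (7 + (4 * j + 4)) * (6 + (4 * j + 4)) * (5 + (4 * j + 4)) * (4 + (4 * j + 4)) * (3 + (4 * j + 4)) * (2 + (4 * j + 4)) * (1 + (4 * j + 4)) * (0 + (4 * j + 4))).
Proof.
have -> : (j + 1 + 1) * ((9 + (4 * j + 4)) * (8 + (4 * j + 4)) * (7 + (4 * j + 4)) * (6 + (4 * j + 4)) * (5 + (4 * j + 4)) * (4 + (4 * j + 4)) * (3 + (4 * j + 4)) * (2 + (4 * j + 4)) * (1 + (4 * j + 4)) * (0 + (4 * j + 4))) = 3 * (9 + (4 * j + 4)) * ((9 + (3 * j + 1)) * (8 + (3 * j + 1)) * (7 + (3 * j + 1)) * (6 + (3 * j + 1)) * (5 + (3 * j + 1)) * (4 + (3 * j + 1)) * (3 + (3 * j + 1)) * (2 + (3 * j + 1)) * (1 + (3 * j + 1)) * (0 + (3 * j + 1))) + (1934150400 * j ^ 0 + 10932812640 * j ^ 1 + 27368416296 * j ^ 2 + 40057605748 * j ^ 3 + 38104022850 * j ^ 4 + 24749780645 * j ^ 5 + 11210725953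 * j ^ 6 + 3545187414 * j ^ 7 + 768114000 * j ^ 8 + 108788765 * j ^ 9 + 9085701 * j ^ 10 + 339988 * j ^ 11) by ring.
exact: leq_addr.
Qed.

Lemma poly2 (j : nat) : 3 * (9 + (4 * j + 5)) * ((9 + (3 * j + 2)) * (8 + (3 * j + 2)) * (7 + (3 * j + 2)) * (6 + (3 * j + 2)) * (5 + (3 * j + 2)) * (4 + (3 * j + 2)) * (3 + (3 * j + 2)) * (2 + (3 * j + 2)) * (1 + (3 * j + 2)) * (0 + (3 * j + 2))) <= (j + 1 + 2) * ((9 + (4 * j + 5)) * (8 + (4 * j + 5)) * (7 + (4 * j + 5)) * (6 + (4 * j + 5)) * (5 + (4 * j + 5)) * (4 + (4 * j + 5)) * (3 + (4 * j + 5)) * (2 + (4 * j + 5)) * (1 + (4 * j + 5)) * (0 + (4 * j + 5))).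
Proof.
have -> : (j + 1 + 2) * ((9 + (4 * j + 5)) * (8 + (4 * j + 5)) * (7 + (4 * j + 5)) * (6 + (4 * j + 5)) * (5 + (4 * j + 5)) * (4 + (4 * j + 5)) * (3 + (4 * j + 5)) * (2 + (4 * j + 5)) * (1 + (4 * j + 5)) * (0 + (4 * j + 5))) = 3 * (9 + (4 * j + 5)) * ((9 + (3 * j + 2)) * (8 + (3 * j + 2)) * (7 + (3 * j + 2)) * (6 + (3 * j + 2)) * (5 + (3 * j + 2)) * (4 + (3 * j + 2)) * (3 + (3 * j + 2)) * (2 + (3 * j + 2)) * (1 + (3 * j + 2)) * (0 + (3 * j + 2))) + (9220780800 * j ^ 0 + 43916523840 * j ^ 1 + 93194202960 * j ^ 2 + 116351476968 * j ^ 3 + 95001076900 * j ^ 4 + 53295502010 * j ^ 5 + 20976289530 * j ^ 6 + 5797021944 * j ^ 7 + 1103545200 * j ^ 8 + 137989650 * j ^ 9 + 10216610 * j ^ 10 + 339988 * j ^ 11) by ring.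
exact: leq_addr.
Qed.

Lemma poly3 (j : nat) : 3 * (9 + (4 * j + 6)) * ((9 + (3 * j + 3)) * (8 + (3 * j + 3)) * (7 + (3 * j + 3)) * (6 + (3 * j + 3)) * (5 + (3 * j + 3)) * (4 + (3 * j + 3)) * (3 + (3 * j + 3)) * (2 + (3 * j + 3)) * (1 + (3 * j + 3)) * (0 + (3 * j + 3))) <= (j + 1 + 3) * ((9 + (4 * j + 6)) * (8 + (4 * j + 6)) * (7 + (4 * j + 6)) * (6 + (4 * j + 6)) * (5 + (4 * j + 6)) * (4 + (4 * j + 6)) * (3 + (4 * j + 6)) * (2 + (4 * j + 6)) * (1 + (4 * j + 6)) * (0 + (4 * j + 6))).
Proof.
have -> : (j + 1 + 3) * ((9 + (4 * j + 6)) * (8 + (4 * j + 6)) * (7 + (4 * j + 6)) * (6 + (4 * j + 6)) * (5 + (4 * j + 6)) * (4 + (4 * j + 6)) * (3 + (4 * j + 6)) * (2 + (4 * j + 6)) * (1 + (4 * j + 6)) * (0 + (4 * j + 6))) = 3 * (9 + (4 * j + 6)) * ((9 + (3 * j + 3)) * (8 + (3 * j + 3)) * (7 + (3 * j + 3)) * (6 + (3 * j + 3)) * (5 + (3 * j + 3)) * (4 + (3 * j + 3)) * (3 + (3 * j + 3)) * (2 + (3 * j + 3)) * (1 + (3 * j + 3)) * (0 + (3 * j + 3))) + (32811609600 * j ^ 0 + 136628164800 * j ^ 1 + 254642389344 * j ^ 2 + 280483299588 * j ^ 3 + 202942021820 * j ^ 4 + 101313762755 * j ^ 5 + 35622907887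 * j ^ 6 + 8825046474 * j ^ 7 + 1510152630 * j ^ 8 + 170064795 * j ^ 9 + 11347519 * j ^ 10 + 339988 * j ^ 11) by ring.
exact: leq_addr.
Qed.

Lemma key N X : 10 <= N -> X * 'C(N, N %/ 4) <= N * 'C(N - 10, N %/ 4) ->
  3 * (N %/ 4 + X) <= N - 2.
Proof.
move=> HN10 HX.
have HN := divn_eq N 4.
have Hr := ltn_pmod N (isT : 0 < 4).
set k := N %/ 4 in HX HN *.
have Hpoly : 3 * N * (N - k) ^_ 10 <= (N - 2 - 3 * k) * N ^_ 10.
  case: (ltnP (N - k) 10) => Hsmall.
    by rewrite (ffact_small Hsmall) muln0.
  have Hk : 3 <= k by lia.
  have [j Ej] : exists j, k = j + 3 by exists (k - 3); lia.
  move: HN Hr; case: (N %% 4) => [|[|[|[|r]]]] HN Hr //.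
  - have E1 : N - k = 9 + (3 * j + 0) by lia.
    have E3 : N - 2 - 3 * k = j + 1 + 0 by lia.
    have E2 : N = 9 + (4 * j + 3) by lia.
    rewrite E1 E3 E2 !ff10; exact: poly0.
  - have E1 : N - k = 9 + (3 * j + 1) by lia.
    have E3 : N - 2 - 3 * k = j + 1 + 1 by lia.
    have E2 : N = 9 + (4 * j + 4) by lia.
    rewrite E1 E3 E2 !ff10; exact: poly1.
  - have E1 : N - k = 9 + (3 * j + 2) by lia.
    have E3 : N - 2 - 3 * k = j + 1 + 2 by lia.
    have E2 : N = 9 + (4 * j + 5) by lia.
    rewrite E1 E3 E2 !ff10; exact: poly2.
  - have E1 : N - k = 9 + (3 * j + 3) by lia.
    have E3 : N - 2 - 3 * k = j + 1 + 3 by lia.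
    have E2 : N = 9 + (4 * j + 6) by lia.
    rewrite E1 E3 E2 !ff10; exact: poly3.
have Hsh := bin_ffact_shift N k 10.
have HF0 : 0 < N ^_ 10 by rewrite ffact_gt0.
have HC0 : 0 < 'C(N, k) by rewrite bin_gt0; lia.
move: Hpoly Hsh HF0 HC0.
set F := N ^_ 10; set G := (N - k) ^_ 10; set C := 'C(N, k); set C' := 'C(N - 10, k).
move=> Hpoly Hsh HF0 HC0.
have H1 : X * C * F <= N * C' * F by rewrite leq_mul2r HX orbT.
have H3 : (3 * X) * (C * F) <= (N - 2 - 3 * k) * (C * F).
  apply: (@leq_trans (3 * (N * C' * F))).
    have -> : 3 * X * (C * F) = 3 * (X * C * F) by ring.
    by rewrite leq_mul2l H1 orbT.
  have -> : 3 * (N * C' * F) = 3 * N * (C' * F) by ring.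
  rewrite Hsh.
  have -> : 3 * N * (C * G) = C * (3 * N * G) by ring.
  have -> : (N - 2 - 3 * k) * (C * F) = C * ((N - 2 - 3 * k) * F) by ring.
  by rewrite leq_mul2l Hpoly orbT.
rewrite leq_pmul2r in H3; last by rewrite muln_gt0 HF0 HC0.
lia.
Qed.

Lemma bigmin_le (I : finType) (P : pred I) (F : I -> nat) x j :
  P j -> \big[minn/x]_(i | P i) F i <= F j.
Proof.
move=> Pj.
have : j \in index_enum I by rewrite mem_index_enum.
elim: (index_enum I) => [//|a s IH]; rewrite inE big_cons => /orP[/eqP Ha|/IH H].
  by rewrite -Ha Pj geq_minl.
by case: (P a) => //; rewrite geq_min H orbT.
Qed.

Lemma bigmin_ge (I : finType) (P : pred I) (F : I -> nat) x m :
  m <= x -> (forall i, P i -> m <= F i) -> m <= \big[minn/x]_(i | P i) F i.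
Proof.
move=> Hx HF; apply: (big_ind (fun y => m <= y)) => //.
by move=> a b Ha Hb; rewrite leq_min Ha Hb.
Qed.

Lemma trop_card (T : finType) (c : nat) (col : T -> 'I_c) (D : {set T}) :
  tropical col D -> c <= #|D|.
Proof.
move=> H.
have : [set: 'I_c] \subset col @: D.
  apply/subsetP => k _; move/forallP/(_ k)/existsP: H => [x /andP[xD /eqP <-]].
  exact: imset_f.
move/subset_leq_card; rewrite cardsT card_ord => H1.
exact: leq_trans H1 (leq_imset_card _ _).
Qed.

Definition domby (T : finType) (e : rel T) (S : {set T}) : {set T} :=
  [set x | (x \in S) || [exists y in S, e x y]].
Arguments domby {T}.

Theorem mainTheorem6 (T : finType) (e : rel T) (c : nat) (col : T -> 'I_c) :
  simple_graph e -> connected_graph e -> surjective_colouring col ->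
  9 <= min_deg e ->
  gamma_t e col = c \/
  ((gamma_t e col)%:R <
     ((min_deg e)%:R * ((#|T|)%:R - c%:R + 1)) / (3 * (min_deg e)%:R - 1)
     + c%:R - 1 :> rat)%R.
Proof.
move=> [esym eirr] _ surj Hd.
have repP (k : 'I_c) : {x | col x == k}.
  by apply: sigW; case: (surj k) => x Hx; exists x; rewrite Hx.
pose rep k := sval (repP k).
have colrep k : col (rep k) = k by apply/eqP; exact: (svalP (repP k)).
have rep_inj : injective rep by move=> k1 k2 H; rewrite -(colrep k1) -(colrep k2) H.
pose R := rep @: [set: 'I_c].
have cardR : #|R| = c by rewrite card_imset // cardsT card_ord.
have tropR : tropical col R.
  apply/forallP => k; apply/existsP; exists (rep k).
  by rewrite imset_f ?inE // colrep eqxx.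
have gt_c : c <= gamma_t e col.
  apply: bigmin_ge; first by rewrite -cardR max_card.
  by move=> D /andP[_ HD]; exact: trop_card HD.
pose W := ~: R.
pose U := ~: domby e R.
have HTN : #|T| = c + #|W| by rewrite -cardR cardsC.
have HgD : forall D, tropical_dominating e col D -> gamma_t e col <= #|D|.
  by move=> D HD; apply: bigmin_le.
have [U0|/set0Pn [u0 u0U]] := eqVneq U set0.
  left; apply/eqP; rewrite eqn_leq gt_c andbT -{2}cardR; apply: HgD.
  rewrite /tropical_dominating tropR andbT; apply/forallP => x.
  have : x \notin U by rewrite U0 inE.
  by rewrite !inE negbK.
right.
set N := #|W|.
set d := min_deg e.
pose Ncl u := u |: nbhd e u.
have NclW : forall u, u \in U -> Ncl u \subset W.
  move=> u; rewrite !inE negb_or => /andP[uR /existsPn Hn].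
  apply/subsetP => y; rewrite !inE => /orP[/eqP -> //|euy].
  apply/negP => yR; move: (Hn y); rewrite yR euy //.
have cardNcl : forall u, 10 <= #|Ncl u|.
  move=> u; rewrite cardsU1 /nbhd inE eirr /=.
  have : d <= deg e u by apply: bigmin_le.
  rewrite /deg /nbhd; lia.
have N10 : 10 <= N by apply: leq_trans (cardNcl u0) (subset_leq_card (NclW u0 u0U)).
set k := N %/ 4.
pose Sk := [set S : {set T} | S \subset W & #|S| == k].
pose X (S : {set T}) := #|U :\: domby e S|.
have cardSk : #|Sk| = 'C(N, k) by rewrite cards_draws.
have Ckpos : 0 < 'C(N, k) by rewrite bin_gt0; lia.
have Hsum : \sum_(S in Sk) X S <= N * 'C(N - 10, k).
  have E1 : forall S, X S = \sum_(u in U) (u \notin domby e S).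
    move=> S; rewrite /X -sum1_card big_mkcond [RHS]big_mkcond /=.
    by apply: eq_bigr => i _; rewrite !inE; do 2 case: (_ || _).
  under eq_bigr => S _ do rewrite E1.
  rewrite exchange_big /=.
  apply: (@leq_trans (\sum_(u in U) 'C(N - 10, k))).
    apply: leq_sum => u uU.
    have E2 : \sum_(S in Sk) (u \notin domby e S) = #|[set S in Sk | u \notin domby e S]|.
      rewrite -sum1_card big_mkcond [RHS]big_mkcond /=.
      by apply: eq_bigr => i _; rewrite !inE; case: (_ && _); case: (_ || _).
    rewrite E2.
    apply: (@leq_trans #|[set S : {set T} | S \subset W :\: Ncl u & #|S| == k]|).
      apply: subset_leq_card; apply/subsetP => S; rewrite !inE => /andP[/andP[SW Sk'] Hu].
      rewrite Sk' andbT; apply/subsetP => y yS; rewrite !inE.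
      move: Hu; rewrite negb_or => /andP[uS /existsPn Hn].
      have ey : ~~ e u y by move: (Hn y); rewrite yS.
      rewrite (negbTE ey) orbF.
      have -> : (y == u) = false by apply/negbTE; apply/eqP => Eyu; move: uS; rewrite -Eyu yS.
      by move: (subsetP SW y yS); rewrite inE.
    rewrite cards_draws; apply: leq_bin2l.
    rewrite cardsD (setIidPr (NclW u uU)).
    have := cardNcl u; rewrite /N; lia.
  rewrite sum_nat_const leq_mul2r; apply/orP; right.
  apply: subset_leq_card; apply/subsetP => x xU.
  by move: (NclW x xU); move/subsetP; apply; rewrite !inE eqxx.
have [S0 S0in] : exists S0, S0 \in Sk by apply/card_gt0P; rewrite cardSk.
case: (arg_minnP X S0in) => S SSk Smin.
have HXS : X S * 'C(N, k) <= N * 'C(N - 10, k).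
  apply: leq_trans Hsum.
  rewrite mulnC -cardSk -sum_nat_const.
  by apply: leq_sum => S' /Smin.
have Hkey := @key N (X S) N10 HXS.
pose D := R :|: S :|: (U :\: domby e S).
have Dtd : tropical_dominating e col D.
  apply/andP; split.
    apply/forallP => x.
    case xU : (x \in U).
      case xdS : (x \in domby e S).
        move: xdS; rewrite inE => /orP[xS|/existsP[y /andP[yS exy]]].
          by rewrite !inE xS orbT.
        apply/orP; right; apply/existsP; exists y; rewrite exy andbT !inE yS orbT //.
      by move: xU xdS; rewrite !inE => -> ->; rewrite !orbT.
    move: xU; rewrite !inE => /negbFE /orP[xR|/existsP[y /andP[yR exy]]].
      by rewrite xR.
    apply/orP; right; apply/existsP; exists y; rewrite exy andbT !inE yR //.
  apply/forallP => kk; apply/existsP; exists (rep kk).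
  by rewrite !inE imset_f ?inE // colrep eqxx.
have HD : #|D| <= c + (k + X S).
  rewrite /D; apply: (leq_trans (leq_card_setU _ _).1).
  rewrite addnA leq_add2r; apply: (leq_trans (leq_card_setU _ _).1).
  have : S \in Sk := SSk.
  by rewrite inE => /andP[_ /eqP ->]; rewrite cardR.
have Hg := leq_trans (HgD D Dtd) HD.
have Ha : (3 * (k + X S) + 2 <= N)%N by lia.
move: Hg Ha; set a := k + X S; set g := gamma_t e col => Hg Ha.
Local Open Scope ring_scope.
rewrite HTN natrD.
have Hd9 : (9 : rat) <= d%:R by rewrite (ler_nat rat 9 d).
have Hg' : (g%:R : rat) <= c%:R + a%:R by rewrite -natrD ler_nat.
have Ha' : (3 * a%:R + 2 : rat) <= N%:R.
  by have := Ha; rewrite -(ler_nat rat) natrD natrM.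
have Hpos : (0 : rat) < 3 * d%:R - 1 by lra.
have E : (d%:R * (c%:R + N%:R - c%:R + 1) / (3 * d%:R - 1) : rat)
   = (N%:R + 1) / 3 + (N%:R + 1) / (3 * (3 * d%:R - 1)).
  field; rewrite lt0r_neq0 //.
rewrite E.
have Hp : (0 : rat) < (N%:R + 1) / (3 * (3 * d%:R - 1)).
  apply: divr_gt0; [|lra]; have : (0 : rat) <= N%:R by []. lra.
lra.
Qed.
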